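(* Let $m\geq 3$ and let $R(m,3)$ be the rectangular supergrid graph induced by $\{(x,y):1\leq x\leq m,\ 1\leq y\leq 3\}$. Let $z_1=(m,1)$, $z_2=(m,2)$, $z_3=(m,3)$, $e_{12}=(z_1,z_2)$ and $e_{23}=(z_2,z_3)$. If $s$ and $t$ are two distinct vertices of $R(m,3)$ with $\{s,t\}\cap\{z_1,z_2,z_3\}=\emptyset$, then there exists a Hamiltonian path of $R(m,3)$ from $s$ to $t$ that contains both edges $e_{12}$ and $e_{23}$.
   Context: The supergrid graph $S^\infty$ has vertex set $\mathbb{Z}^2$, two distinct vertices $u,v$ being adjacent iff $|u_x-v_x|\leq 1$ and $|u_y-v_y|\leq 1$; a supergrid graph is a finite vertex-induced subgraph of $S^\infty$. A Hamiltonian path from $s$ to $t$ is a simple path from $s$ to $t$ visiting every vertex exactly once. *)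

(* Defs.v *)
From mathcomp Require Import all_boot.
Set Implicit Arguments. Unset Strict Implicit. Unset Printing Implicit Defensive.

(* Vertices of the infinite supergrid S^infty are points of Z^2; the
   rectangular supergrid graph R(m,n) lives in the positive quadrant, so we
   use nat * nat coordinates (coordinates 1..m, 1..n). *)
Definition vtx := (nat * nat)%type.

(* adjacency in S^infty: distinct and |u_x-v_x|<=1, |u_y-v_y|<=1
   (written with truncated nat subtraction in both directions) *)
Definition sg_adj (u v : vtx) : bool :=
  (u != v) && (u.1 - v.1 <= 1) && (v.1 - u.1 <= 1) && (u.2 - v.2 <= 1) && (v.2 - u.2 <= 1).

Definition in_rect (m n : nat) (v : vtx) : bool :=
  (1 <= v.1 <= m) && (1 <= v.2 <= n).

Definition ham_path (V : pred vtx) (s t : vtx) (p : seq vtx) : Prop :=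
  exists q : seq vtx, p = s :: q /\
  [/\ uniq p, all V p, (forall v, V v -> v \in p),
      path sg_adj s q & last s q = t].

Definition path_has_edge (p : seq vtx) (u v : vtx) : Prop :=
  exists i, i.+1 < size p /\
    ((nth u p i = u /\ nth u p i.+1 = v) \/ (nth u p i = v /\ nth u p i.+1 = u)).

(* Main.v *)
Require Import Defs.
From mathcomp Require Import all_boot zify.
Set Implicit Arguments. Unset Strict Implicit.

Definition rect (lo hi : nat) (v : vtx) : bool := (lo <= v.1 <= hi) && (1 <= v.2 <= 3).

Definition good (V : pred vtx) (p : seq vtx) : Prop :=
  [/\ uniq p, sorted sg_adj p & forall v, V v = (v \in p)].

Definition ends (p : seq vtx) (s t : vtx) : bool :=
  [&& p != [::], head (0,0) p == s & last (0,0) p == t].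

Fixpoint prs (p : seq vtx) : seq (vtx * vtx) :=
  if p is x :: q then (if q is y :: _ then (x,y) :: prs q else [::]) else [::].

Lemma prs_cat l x q : prs (l ++ x :: q) = prs (rcons l x) ++ prs (x :: q).
Proof.
elim: l => [//|a l IH] /=. rewrite IH. by case: l {IH}.
Qed.

Lemma prs_catr p1 p2 uv : uv \in prs p2 -> uv \in prs (p1 ++ p2).
Proof.
case: p2 => [//|x q] h. by rewrite prs_cat mem_cat h orbT.
Qed.

Lemma prs_catl p1 p2 uv : uv \in prs p1 -> uv \in prs (p1 ++ p2).
Proof.
case: p2 => [|x q]; first by rewrite cats0.
case/lastP: p1 => [//|l y] h.
by rewrite cat_rcons prs_cat mem_cat h.
Qed.

Lemma mem_prs p u v : (u, v) \in prs p -> exists l r, p = l ++ u :: v :: r.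
Proof.
elim: p => [//|a p IH] /=. case: p IH => [//|b p] IH.
rewrite inE => /orP [/eqP [-> ->]|h]; first by exists [::], p.
case: (IH h) => l [r e]. exists (a :: l), r. by rewrite e.
Qed.

Lemma prs_map f p : prs (map f p) = map (fun uv => (f uv.1, f uv.2)) (prs p).
Proof. elim: p => [//|a p IH] /=. case: p IH => [//|b p] IH /=. by rewrite -IH. Qed.

Lemma prs_ins l x y r ins uv : uv \in prs (l ++ x :: y :: r) -> uv != (x, y) ->
  uv \in prs (l ++ x :: ins ++ y :: r).
Proof.
move=> h ne. move: h; rewrite !prs_cat !mem_cat => /orP [->//|h].
apply/orP; right. have -> : x :: ins ++ y :: r = (x :: ins) ++ (y :: r) by [].
apply: prs_catr. have e : prs (x :: y :: r) = (x,y) :: prs (y :: r) by [].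
by move: h; rewrite e inE (negbTE ne).
Qed.

Lemma sorted_cat_cons (l : seq vtx) x q :
  sorted sg_adj (l ++ x :: q) = sorted sg_adj (rcons l x) && path sg_adj x q.
Proof.
case: l => [//|a l] /=. by rewrite cat_path rcons_path /= andbA.
Qed.

Lemma good_ins V W l x y r ins :
  good V (l ++ x :: y :: r) -> good W ins -> (forall v, V v -> W v -> False) ->
  ins != [::] -> sg_adj x (head x ins) -> sg_adj (last x ins) y ->
  good (fun v => V v || W v) (l ++ x :: ins ++ y :: r).
Proof.
move=> [u1 s1 c1] [u2 s2 c2] dis ne a1 a2.
have pe : perm_eq (l ++ x :: ins ++ y :: r) (ins ++ (l ++ x :: y :: r)).
  apply/permP => z. rewrite !count_cat /= count_cat /=. lia.
split.
- rewrite (perm_uniq pe) cat_uniq u1 u2 andbT /=.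
  apply/hasPn => v vin. apply/negP => vin2.
  apply: (dis v); by [rewrite c1 | rewrite c2].
- rewrite sorted_cat_cons. move: s1. rewrite sorted_cat_cons => /andP [-> /= /andP [_ py]].
  case: ins ne a1 a2 s2 {pe u2 c2} => [//|i0 q] _ /= a1 a2 s2.
  by rewrite cat_path a1 s2 /= a2 py.
- move=> v. rewrite (perm_mem pe) mem_cat -c1 -c2. by rewrite orbC.
Qed.

Lemma ends_ins l x y r ins s t : ends (l ++ x :: y :: r) s t -> ends (l ++ x :: ins ++ y :: r) s t.
Proof.
rewrite /ends. case: l => [|a l] /=; by rewrite ?last_cat /= ?last_cat.
Qed.

Lemma good_cat V W p1 p2 :
  good V p1 -> good W p2 -> (forall v, V v -> W v -> False) ->
  p1 != [::] -> p2 != [::] -> sg_adj (last (0,0) p1) (head (0,0) p2) ->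
  good (fun v => V v || W v) (p1 ++ p2).
Proof.
move=> [u1 s1 c1] [u2 s2 c2] dis.
case: p1 u1 s1 c1 => [//|a q1] u1 s1 c1 _.
case: p2 u2 s2 c2 => [//|b q2] u2 s2 c2 _ ad.
split.
- rewrite cat_uniq u1 u2 andbT.
  apply/hasPn => v vin. apply/negP => vin2.
  apply: (dis v); by [rewrite c1 | rewrite c2].
- move: s1 ad => /= s1 ad. by rewrite cat_path s1 /= ad.
- move=> v. by rewrite mem_cat -c1 -c2.
Qed.

Lemma ends_cat p1 p2 s e e' t : ends p1 s e -> ends p2 e' t -> ends (p1 ++ p2) s t.
Proof.
rewrite /ends. case: p1 => [//|a q1]. case: p2 => [//|b q2] /=.
by rewrite last_cat /= => /andP [-> _] /andP [_ ->].
Qed.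

Definition sh (d : nat) (v : vtx) : vtx := (d + v.1, v.2).

Lemma sg_adj_sh d u v : sg_adj (sh d u) (sh d v) = sg_adj u v.
Proof.
case: u => a b; case: v => c e. rewrite /sg_adj /sh /= !xpair_eqE eqn_add2l !subnDl.
by [].
Qed.

Lemma sh_inj d : injective (sh d).
Proof. move=> [a b] [c e] /= [h ->]. congr (_, _). lia. Qed.

Lemma path_sh d x q : path sg_adj (sh d x) (map (sh d) q) = path sg_adj x q.
Proof. elim: q x => [//|a q IH] x /=. by rewrite sg_adj_sh IH. Qed.

Lemma good_sh d lo hi p : good (rect lo hi) p -> good (rect (d + lo) (d + hi)) (map (sh d) p).
Proof.
move=> [u1 s1 c1]. split.
- by rewrite (map_inj_uniq (@sh_inj d)).
- case: p s1 {u1 c1} => [//|a q] /=. by rewrite path_sh.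
- move=> [a b]. apply/idP/idP.
  + move=> h. have -> : (a, b) = sh d (a - d, b).
      rewrite /sh /=. congr (_, _). move: h; rewrite /rect /=. lia.
    apply: map_f. rewrite -c1. move: h; rewrite /rect /=. lia.
  + case/mapP => [[c e] cin [-> ->]]. move: cin. rewrite -c1 /rect /=. lia.
Qed.

Lemma ends_sh d p s t : ends p s t -> ends (map (sh d) p) (sh d s) (sh d t).
Proof.
rewrite /ends. case: p => [//|a q] /= /andP [/eqP -> /eqP <-].
by rewrite (last_map (sh d)) !eqxx.
Qed.

Lemma prs_sh d p u v : (u, v) \in prs p -> (sh d u, sh d v) \in prs (map (sh d) p).
Proof. move=> h. rewrite prs_map. exact: (map_f (fun uv => (sh d uv.1, sh d uv.2)) h). Qed.

Definition enumr (lo hi : nat) : seq vtx :=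
  [seq (x, y) | x <- iota lo (hi.+1 - lo), y <- [:: 1; 2; 3]].

Lemma mem_enumr lo hi v : (v \in enumr lo hi) = rect lo hi v.
Proof.
case: v => a b. apply/allpairsP/idP.
- move=> [[x y] /= [hx hy [-> ->]]]. move: hx hy; rewrite mem_iota !inE /rect /=. lia.
- rewrite /rect /= => h. exists (a, b) => /=. split => //.
  + rewrite mem_iota. lia.
  + rewrite !inE. lia.
Qed.

Lemma good_of lo hi p : uniq p -> sorted sg_adj p -> perm_eq p (enumr lo hi) -> good (rect lo hi) p.
Proof. move=> u s pe. split => // v. by rewrite (perm_mem pe) mem_enumr. Qed.

Lemma rect_split lo mid hi v : lo <= mid.+1 -> mid <= hi ->
  rect lo hi v = rect lo mid v || rect mid.+1 hi v.
Proof. rewrite /rect. lia. Qed.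

Lemma rect_dis lo mid hi v : rect lo mid v -> rect mid.+1 hi v -> False.
Proof. rewrite /rect. lia. Qed.

Lemma good_eq V W p : good V p -> V =1 W -> good W p.
Proof. move=> [u s c] e. split => // v. by rewrite -e. Qed.

Definition zinv (m : nat) (p : seq vtx) : bool :=
  (((m,1),(m,2)) \in prs p) && (((m,2),(m,3)) \in prs p) ||
  (((m,3),(m,2)) \in prs p) && (((m,2),(m,1)) \in prs p).

Definition col1e (uv : vtx * vtx) : bool :=
  [&& uv.1.1 == 1, uv.2.1 == 1 & (uv.1.2, uv.2.2) \in [:: (1,2); (2,1); (2,3); (3,2)]].

Definition col1b (p : seq vtx) : bool := has col1e (prs p).

Definition A m := forall s t, rect 1 m s -> rect 1 m t -> s != t -> s.1 < m -> t.1 < m ->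
  exists p, [/\ good (rect 1 m) p, ends p s t, zinv m p & (1 < s.1) ==> (1 < t.1) ==> col1b p].

Lemma prs_cons2 x y q : prs (x :: y :: q) = (x, y) :: prs (y :: q).
Proof. by []. Qed.

Lemma zinv_sh d m p : zinv m p -> zinv (d + m) (map (sh d) p).
Proof.
rewrite /zinv => /orP [/andP [h1 h2]|/andP [h1 h2]]; apply/orP; [left|right];
  by rewrite (prs_sh d h1) (prs_sh d h2).
Qed.

Lemma col_good n a c : (a, c) \in [:: (1,3); (3,1)] ->
  good (rect n.+1 n.+1) [:: (n.+1,a); (n.+1,2); (n.+1,c)].
Proof.
move=> hac.
have hg : good (rect 1 1) [:: (1,a); (1,2); (1,c)].
  by move: hac; rewrite !inE => /orP [] /eqP [-> ->]; apply: good_of.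
have := good_sh n hg. by rewrite /sh /= !addn1.
Qed.

Lemma right_ext m p s t : 3 <= m -> good (rect 1 m) p -> ends p s t -> zinv m p ->
  exists p', [/\ good (rect 1 m.+1) p', ends p' s t, zinv m.+1 p' & (col1b p -> col1b p')].
Proof.
move=> hm g e z.
have [a [c [hac h1 h2]]] : exists a c, [/\ (a, c) \in [:: (1,3); (3,1)],
    ((m,2),(m,c)) \in prs p & ((m,a),(m,2)) \in prs p].
  move: z; rewrite /zinv => /orP [/andP [h1 h2]|/andP [h1 h2]].
  - by exists 1, 3.
  - by exists 3, 1.
case: (mem_prs h1) => l [r ep].
exists (l ++ (m,2) :: [:: (m.+1,a); (m.+1,2); (m.+1,c)] ++ (m,c) :: r).
have acs : (a == 1) && (c == 3) || (a == 3) && (c == 1).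
  by move: hac; rewrite !inE !xpair_eqE.
split.
- apply: (@good_eq (fun v => rect 1 m v || rect m.+1 m.+1 v)).
  + rewrite ep in g. apply: (good_ins g (col_good m hac)) => //.
    * move=> v; exact: rect_dis.
    * rewrite /sg_adj /= !xpair_eqE. lia.
    * rewrite /sg_adj /= !xpair_eqE. lia.
  + move=> v /=. by rewrite (@rect_split 1 m m.+1 v).
- apply: ends_ins. by rewrite -ep.
- rewrite /zinv !prs_cat !mem_cat !prs_cons2 !inE.
  move: acs => /orP [] /andP [/eqP -> /eqP ->]; by rewrite !eqxx ?orbT.
- rewrite /col1b => /hasP [uv uvin cu]. apply/hasP; exists uv => //.
  apply: prs_ins; first by rewrite -ep.
  apply/negP => /eqP ee. move: cu; rewrite ee /col1e /=. lia.
Qed.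

Lemma zinv_ins n l x y r ins : zinv n (l ++ x :: y :: r) -> x.1 != n ->
  zinv n (l ++ x :: ins ++ y :: r).
Proof.
move=> z hx.
have P : forall u v, u.1 = n -> (u, v) \in prs (l ++ x :: y :: r) -> (u, v) \in prs (l ++ x :: ins ++ y :: r).
  move=> u v hu h. apply: prs_ins h _. apply/negP => /eqP [e1 _]. by rewrite -e1 hu eqxx in hx.
move: z; rewrite /zinv => /orP [/andP [h1 h2]|/andP [h1 h2]]; apply/orP; [left|right];
  by rewrite !P.
Qed.

Lemma col1b_pair l x a b q : col1e (a, b) -> col1b (l ++ x :: a :: b :: q).
Proof.
move=> h. apply/hasP; exists (a, b) => //.
by rewrite prs_cat mem_cat !prs_cons2 !inE eqxx !orbT.
Qed.

Lemma left_ext m p s t : 3 <= m -> good (rect 1 m) p -> ends p s t -> zinv m p -> col1b p ->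
  exists p', [/\ good (rect 1 m.+1) p', ends p' (sh 1 s) (sh 1 t), zinv m.+1 p' & col1b p'].
Proof.
move=> hm g e z /hasP [[[u1 u2] [v1 v2]] uvin cu].
have gq := good_sh 1 g. have eq := ends_sh 1 e. have zq := zinv_sh 1 z.
have hq := prs_sh 1 uvin. case: (mem_prs hq) => l [r ep].
rewrite ep in gq eq zq.
move: cu => /and3P [/eqP /= e1 /eqP /= e2 hin]. subst u1 v1.
have key : forall ins, good (rect 1 1) ins -> ins != [::] ->
    sg_adj (sh 1 (1, u2)) (head (sh 1 (1, u2)) ins) ->
    sg_adj (last (sh 1 (1, u2)) ins) (sh 1 (1, v2)) ->
    good (rect 1 m.+1) (l ++ sh 1 (1, u2) :: ins ++ sh 1 (1, v2) :: r).
  move=> ins gi ne a1 a2.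
  apply: (@good_eq (fun v => rect 2 m.+1 v || rect 1 1 v)).
  + apply: (good_ins gq gi) => //. move=> v h1 h2; exact: (rect_dis h2 h1).
  + move=> v /=. by rewrite orbC (@rect_split 1 1 m.+1 v).
have zk : forall ins, zinv m.+1 (l ++ sh 1 (1, u2) :: ins ++ sh 1 (1, v2) :: r).
  move=> ins. apply: zinv_ins zq _. rewrite /=. lia.
have ek : forall ins, ends (l ++ sh 1 (1, u2) :: ins ++ sh 1 (1, v2) :: r) (sh 1 s) (sh 1 t).
  move=> ins. exact: ends_ins.
move: hin; rewrite !inE => /or4P [] /eqP [e3 e4]; subst u2 v2.
- exists (l ++ sh 1 (1, 1) :: [:: (1,1); (1,2); (1,3)] ++ sh 1 (1, 2) :: r); split => //.
  + by apply: key => //; apply: good_of.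
  + exact: col1b_pair.
- exists (l ++ sh 1 (1, 2) :: [:: (1,3); (1,2); (1,1)] ++ sh 1 (1, 1) :: r); split => //.
  + by apply: key => //; apply: good_of.
  + exact: col1b_pair.
- exists (l ++ sh 1 (1, 2) :: [:: (1,1); (1,2); (1,3)] ++ sh 1 (1, 3) :: r); split => //.
  + by apply: key => //; apply: good_of.
  + exact: col1b_pair.
- exists (l ++ sh 1 (1, 3) :: [:: (1,3); (1,2); (1,1)] ++ sh 1 (1, 2) :: r); split => //.
  + by apply: key => //; apply: good_of.
  + exact: col1b_pair.
Qed.

Definition pres : seq (vtx * seq vtx) := [::
  ((1,1), [:: (1,1); (1,2); (1,3); (2,3); (2,2); (2,1)]);
  ((1,3), [:: (1,3); (1,2); (1,1); (2,1); (2,2); (2,3)]);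
  ((1,2), [:: (1,2); (1,1); (2,1); (2,2); (1,3); (2,3)]);
  ((2,1), [:: (2,1); (1,1); (1,2); (2,2); (1,3); (2,3)]);
  ((2,3), [:: (2,3); (1,3); (1,2); (2,2); (1,1); (2,1)]);
  ((2,2), [:: (2,2); (2,1); (1,1); (1,2); (1,3); (2,3)])].

Definition pre_of (s : vtx) : seq vtx := head [::] [seq x.2 | x <- pres & x.1 == s].

Definition chkpre (s : vtx) : bool := let p := pre_of s in
  [&& uniq p, sorted sg_adj p, perm_eq p (enumr 1 2), ends p s (last (0,0) p),
      sg_adj (last (0,0) p) (3,2) & col1b p].

Definition chkpost (s : vtx) : bool := let p := rev (pre_of s) in
  [&& uniq p, sorted sg_adj p, perm_eq p (enumr 1 2), ends p (head (0,0) p) s,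
      sg_adj (3,2) (head (0,0) p) & col1b p].

Lemma chkpre_all : all chkpre (enumr 1 2) && all chkpost (enumr 1 2).
Proof. by vm_compute. Qed.

Lemma pre_ok s : rect 1 2 s -> exists pre e,
  [/\ good (rect 1 2) pre, ends pre s e, sg_adj e (3,2) & col1b pre].
Proof.
move=> hs. case/andP: chkpre_all => /allP /(_ s) h _.
move: h; rewrite mem_enumr => /(_ hs) /and5P [u so pe en /andP [a c]].
exists (pre_of s), (last (0,0) (pre_of s)). split => //. exact: good_of.
Qed.

Lemma post_ok s : rect 1 2 s -> exists post e,
  [/\ good (rect 1 2) post, ends post e s, sg_adj (3,2) e & col1b post].
Proof.
move=> hs. case/andP: chkpre_all => _ /allP /(_ s) h.
move: h; rewrite mem_enumr => /(_ hs) /and5P [u so pe en /andP [a c]].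
exists (rev (pre_of s)), (head (0,0) (rev (pre_of s))). split => //. exact: good_of.
Qed.

Definition lookup (tbl : seq (vtx * vtx * seq vtx)) (s t : vtx) : seq vtx :=
  head [::] [seq x.2 | x <- tbl & (x.1.1 == s) && (x.1.2 == t)].

Definition chk m p s t : bool :=
  [&& uniq p, sorted sg_adj p, perm_eq p (enumr 1 m), ends p s t, zinv m p &
      (1 < s.1) ==> (1 < t.1) ==> col1b p].

Definition base m tbl : bool :=
  all (fun s => all (fun t => (s == t) || chk m (lookup tbl s t) s t) (enumr 1 m.-1)) (enumr 1 m.-1).

Lemma A_of_base m tbl : base m tbl -> A m.
Proof.
move=> /allP hb s t hs ht ne h1 h2.
have hs' : s \in enumr 1 m.-1 by rewrite mem_enumr; move: hs h1; rewrite /rect; lia.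
have ht' : t \in enumr 1 m.-1 by rewrite mem_enumr; move: ht h2; rewrite /rect; lia.
move: (hb s hs') => /allP /(_ t ht'). rewrite (negbTE ne) /= => /and5P [u so pe en /andP [z c]].
exists (lookup tbl s t). split => //. exact: good_of.
Qed.
Definition tbl3 : seq (vtx * vtx * seq vtx) := [::
  ((1,1),(1,2),[:: (1,1); (2,1); (2,2); (3,1); (3,2); (3,3); (2,3); (1,3); (1,2)]);
  ((1,1),(1,3),[:: (1,1); (1,2); (2,1); (2,2); (3,1); (3,2); (3,3); (2,3); (1,3)]);
  ((1,1),(2,1),[:: (1,1); (1,2); (1,3); (2,2); (2,3); (3,3); (3,2); (3,1); (2,1)]);
  ((1,1),(2,2),[:: (1,1); (1,2); (1,3); (2,3); (3,3); (3,2); (3,1); (2,1); (2,2)]);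
  ((1,1),(2,3),[:: (1,1); (1,2); (1,3); (2,2); (2,1); (3,1); (3,2); (3,3); (2,3)]);
  ((1,2),(1,1),[:: (1,2); (1,3); (2,2); (2,3); (3,3); (3,2); (3,1); (2,1); (1,1)]);
  ((1,2),(1,3),[:: (1,2); (1,1); (2,1); (2,2); (3,1); (3,2); (3,3); (2,3); (1,3)]);
  ((1,2),(2,1),[:: (1,2); (1,1); (2,2); (1,3); (2,3); (3,3); (3,2); (3,1); (2,1)]);
  ((1,2),(2,2),[:: (1,2); (1,1); (2,1); (3,1); (3,2); (3,3); (2,3); (1,3); (2,2)]);
  ((1,2),(2,3),[:: (1,2); (1,1); (2,1); (3,1); (3,2); (3,3); (2,2); (1,3); (2,3)]);
  ((1,3),(1,1),[:: (1,3); (1,2); (2,1); (3,1); (3,2); (3,3); (2,3); (2,2); (1,1)]);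
  ((1,3),(1,2),[:: (1,3); (2,2); (1,1); (2,1); (3,1); (3,2); (3,3); (2,3); (1,2)]);
  ((1,3),(2,1),[:: (1,3); (1,2); (1,1); (2,2); (2,3); (3,3); (3,2); (3,1); (2,1)]);
  ((1,3),(2,2),[:: (1,3); (1,2); (1,1); (2,1); (3,1); (3,2); (3,3); (2,3); (2,2)]);
  ((1,3),(2,3),[:: (1,3); (1,2); (1,1); (2,1); (2,2); (3,1); (3,2); (3,3); (2,3)]);
  ((2,1),(1,1),[:: (2,1); (1,2); (1,3); (2,3); (3,3); (3,2); (3,1); (2,2); (1,1)]);
  ((2,1),(1,2),[:: (2,1); (1,1); (2,2); (3,1); (3,2); (3,3); (2,3); (1,3); (1,2)]);
  ((2,1),(1,3),[:: (2,1); (1,1); (1,2); (2,2); (3,1); (3,2); (3,3); (2,3); (1,3)]);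
  ((2,1),(2,2),[:: (2,1); (1,1); (1,2); (1,3); (2,3); (3,3); (3,2); (3,1); (2,2)]);
  ((2,1),(2,3),[:: (2,1); (1,1); (1,2); (1,3); (2,2); (3,1); (3,2); (3,3); (2,3)]);
  ((2,2),(1,1),[:: (2,2); (1,2); (1,3); (2,3); (3,3); (3,2); (3,1); (2,1); (1,1)]);
  ((2,2),(1,2),[:: (2,2); (1,1); (2,1); (3,1); (3,2); (3,3); (2,3); (1,3); (1,2)]);
  ((2,2),(1,3),[:: (2,2); (1,1); (1,2); (2,1); (3,1); (3,2); (3,3); (2,3); (1,3)]);
  ((2,2),(2,1),[:: (2,2); (1,1); (1,2); (1,3); (2,3); (3,3); (3,2); (3,1); (2,1)]);
  ((2,2),(2,3),[:: (2,2); (1,3); (1,2); (1,1); (2,1); (3,1); (3,2); (3,3); (2,3)]);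
  ((2,3),(1,1),[:: (2,3); (1,2); (1,3); (2,2); (3,3); (3,2); (3,1); (2,1); (1,1)]);
  ((2,3),(1,2),[:: (2,3); (1,3); (2,2); (3,3); (3,2); (3,1); (2,1); (1,1); (1,2)]);
  ((2,3),(1,3),[:: (2,3); (1,2); (1,1); (2,1); (3,1); (3,2); (3,3); (2,2); (1,3)]);
  ((2,3),(2,1),[:: (2,3); (1,3); (1,2); (1,1); (2,2); (3,3); (3,2); (3,1); (2,1)]);
  ((2,3),(2,2),[:: (2,3); (1,3); (1,2); (1,1); (2,1); (3,1); (3,2); (3,3); (2,2)])].

Definition tbl4 : seq (vtx * vtx * seq vtx) := [::
  ((1,1),(1,2),[:: (1,1); (2,1); (2,2); (3,1); (3,2); (4,1); (4,2); (4,3); (3,3); (2,3); (1,3); (1,2)]);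
  ((1,1),(1,3),[:: (1,1); (1,2); (2,1); (2,2); (3,1); (3,2); (4,1); (4,2); (4,3); (3,3); (2,3); (1,3)]);
  ((1,1),(2,1),[:: (1,1); (1,2); (1,3); (2,2); (2,3); (3,2); (3,3); (4,3); (4,2); (4,1); (3,1); (2,1)]);
  ((1,1),(2,2),[:: (1,1); (1,2); (1,3); (2,3); (3,2); (2,1); (3,1); (4,1); (4,2); (4,3); (3,3); (2,2)]);
  ((1,1),(2,3),[:: (1,1); (1,2); (1,3); (2,2); (2,1); (3,1); (3,2); (4,1); (4,2); (4,3); (3,3); (2,3)]);
  ((1,1),(3,1),[:: (1,1); (1,2); (1,3); (2,2); (2,1); (3,2); (2,3); (3,3); (4,3); (4,2); (4,1); (3,1)]);
  ((1,1),(3,2),[:: (1,1); (1,2); (1,3); (2,2); (2,1); (3,1); (4,1); (4,2); (4,3); (3,3); (2,3); (3,2)]);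
  ((1,1),(3,3),[:: (1,1); (1,2); (1,3); (2,2); (2,1); (3,1); (4,1); (4,2); (4,3); (3,2); (2,3); (3,3)]);
  ((1,2),(1,1),[:: (1,2); (1,3); (2,2); (2,3); (3,2); (3,3); (4,3); (4,2); (4,1); (3,1); (2,1); (1,1)]);
  ((1,2),(1,3),[:: (1,2); (1,1); (2,1); (2,2); (3,1); (3,2); (4,1); (4,2); (4,3); (3,3); (2,3); (1,3)]);
  ((1,2),(2,1),[:: (1,2); (1,1); (2,2); (1,3); (2,3); (3,2); (3,3); (4,3); (4,2); (4,1); (3,1); (2,1)]);
  ((1,2),(2,2),[:: (1,2); (1,1); (2,1); (3,1); (3,2); (4,1); (4,2); (4,3); (3,3); (2,3); (1,3); (2,2)]);
  ((1,2),(2,3),[:: (1,2); (1,1); (2,1); (3,1); (3,2); (4,1); (4,2); (4,3); (3,3); (2,2); (1,3); (2,3)]);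
  ((1,2),(3,1),[:: (1,2); (1,1); (2,1); (2,2); (1,3); (2,3); (3,2); (3,3); (4,3); (4,2); (4,1); (3,1)]);
  ((1,2),(3,2),[:: (1,2); (1,1); (2,1); (2,2); (1,3); (2,3); (3,3); (4,3); (4,2); (4,1); (3,1); (3,2)]);
  ((1,2),(3,3),[:: (1,2); (1,1); (2,1); (2,2); (1,3); (2,3); (3,2); (3,1); (4,1); (4,2); (4,3); (3,3)]);
  ((1,3),(1,1),[:: (1,3); (1,2); (2,1); (3,1); (3,2); (4,1); (4,2); (4,3); (3,3); (2,3); (2,2); (1,1)]);
  ((1,3),(1,2),[:: (1,3); (2,2); (1,1); (2,1); (3,1); (3,2); (4,1); (4,2); (4,3); (3,3); (2,3); (1,2)]);
  ((1,3),(2,1),[:: (1,3); (1,2); (1,1); (2,2); (2,3); (3,2); (3,3); (4,3); (4,2); (4,1); (3,1); (2,1)]);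
  ((1,3),(2,2),[:: (1,3); (1,2); (1,1); (2,1); (3,1); (3,2); (4,1); (4,2); (4,3); (3,3); (2,3); (2,2)]);
  ((1,3),(2,3),[:: (1,3); (1,2); (1,1); (2,1); (2,2); (3,1); (3,2); (4,1); (4,2); (4,3); (3,3); (2,3)]);
  ((1,3),(3,1),[:: (1,3); (1,2); (1,1); (2,1); (2,2); (2,3); (3,2); (3,3); (4,3); (4,2); (4,1); (3,1)]);
  ((1,3),(3,2),[:: (1,3); (1,2); (1,1); (2,1); (2,2); (2,3); (3,3); (4,3); (4,2); (4,1); (3,1); (3,2)]);
  ((1,3),(3,3),[:: (1,3); (1,2); (1,1); (2,1); (2,2); (2,3); (3,2); (3,1); (4,1); (4,2); (4,3); (3,3)]);
  ((2,1),(1,1),[:: (2,1); (1,2); (1,3); (2,3); (3,2); (3,1); (4,1); (4,2); (4,3); (3,3); (2,2); (1,1)]);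
  ((2,1),(1,2),[:: (2,1); (1,1); (2,2); (3,1); (3,2); (4,1); (4,2); (4,3); (3,3); (2,3); (1,3); (1,2)]);
  ((2,1),(1,3),[:: (2,1); (1,1); (1,2); (2,2); (3,1); (3,2); (4,1); (4,2); (4,3); (3,3); (2,3); (1,3)]);
  ((2,1),(2,2),[:: (2,1); (1,1); (1,2); (1,3); (2,3); (3,2); (3,1); (4,1); (4,2); (4,3); (3,3); (2,2)]);
  ((2,1),(2,3),[:: (2,1); (1,1); (1,2); (1,3); (2,2); (3,1); (3,2); (4,1); (4,2); (4,3); (3,3); (2,3)]);
  ((2,1),(3,1),[:: (2,1); (1,1); (1,2); (1,3); (2,2); (2,3); (3,2); (3,3); (4,3); (4,2); (4,1); (3,1)]);
  ((2,1),(3,2),[:: (2,1); (1,1); (1,2); (1,3); (2,2); (2,3); (3,3); (4,3); (4,2); (4,1); (3,1); (3,2)]);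
  ((2,1),(3,3),[:: (2,1); (1,1); (1,2); (1,3); (2,2); (2,3); (3,2); (3,1); (4,1); (4,2); (4,3); (3,3)]);
  ((2,2),(1,1),[:: (2,2); (1,2); (1,3); (2,3); (3,2); (3,3); (4,3); (4,2); (4,1); (3,1); (2,1); (1,1)]);
  ((2,2),(1,2),[:: (2,2); (1,1); (2,1); (3,1); (3,2); (4,1); (4,2); (4,3); (3,3); (2,3); (1,3); (1,2)]);
  ((2,2),(1,3),[:: (2,2); (1,1); (1,2); (2,1); (3,1); (3,2); (4,1); (4,2); (4,3); (3,3); (2,3); (1,3)]);
  ((2,2),(2,1),[:: (2,2); (1,1); (1,2); (1,3); (2,3); (3,2); (3,3); (4,3); (4,2); (4,1); (3,1); (2,1)]);
  ((2,2),(2,3),[:: (2,2); (1,3); (1,2); (1,1); (2,1); (3,1); (3,2); (4,1); (4,2); (4,3); (3,3); (2,3)]);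
  ((2,2),(3,1),[:: (2,2); (1,1); (1,2); (1,3); (2,3); (3,3); (4,3); (4,2); (4,1); (3,2); (2,1); (3,1)]);
  ((2,2),(3,2),[:: (2,2); (1,1); (1,2); (1,3); (2,3); (3,3); (4,3); (4,2); (4,1); (3,1); (2,1); (3,2)]);
  ((2,2),(3,3),[:: (2,2); (1,1); (1,2); (1,3); (2,3); (3,2); (2,1); (3,1); (4,1); (4,2); (4,3); (3,3)]);
  ((2,3),(1,1),[:: (2,3); (1,2); (1,3); (2,2); (3,1); (4,1); (4,2); (4,3); (3,3); (3,2); (2,1); (1,1)]);
  ((2,3),(1,2),[:: (2,3); (1,3); (2,2); (3,1); (4,1); (4,2); (4,3); (3,3); (3,2); (2,1); (1,1); (1,2)]);
  ((2,3),(1,3),[:: (2,3); (1,2); (1,1); (2,1); (3,1); (3,2); (4,1); (4,2); (4,3); (3,3); (2,2); (1,3)]);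
  ((2,3),(2,1),[:: (2,3); (1,3); (1,2); (1,1); (2,2); (3,1); (4,1); (4,2); (4,3); (3,3); (3,2); (2,1)]);
  ((2,3),(2,2),[:: (2,3); (1,3); (1,2); (1,1); (2,1); (3,1); (3,2); (4,1); (4,2); (4,3); (3,3); (2,2)]);
  ((2,3),(3,1),[:: (2,3); (1,2); (1,3); (2,2); (1,1); (2,1); (3,2); (3,3); (4,3); (4,2); (4,1); (3,1)]);
  ((2,3),(3,2),[:: (2,3); (1,2); (1,3); (2,2); (1,1); (2,1); (3,1); (4,1); (4,2); (4,3); (3,3); (3,2)]);
  ((2,3),(3,3),[:: (2,3); (1,2); (1,3); (2,2); (1,1); (2,1); (3,1); (3,2); (4,1); (4,2); (4,3); (3,3)]);
  ((3,1),(1,1),[:: (3,1); (2,1); (1,2); (1,3); (2,3); (3,2); (4,1); (4,2); (4,3); (3,3); (2,2); (1,1)]);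
  ((3,1),(1,2),[:: (3,1); (2,1); (1,1); (2,2); (3,2); (4,1); (4,2); (4,3); (3,3); (2,3); (1,3); (1,2)]);
  ((3,1),(1,3),[:: (3,1); (2,1); (1,1); (1,2); (2,2); (3,2); (4,1); (4,2); (4,3); (3,3); (2,3); (1,3)]);
  ((3,1),(2,1),[:: (3,1); (2,2); (1,1); (1,2); (1,3); (2,3); (3,3); (4,3); (4,2); (4,1); (3,2); (2,1)]);
  ((3,1),(2,2),[:: (3,1); (2,1); (1,1); (1,2); (1,3); (2,3); (3,2); (4,1); (4,2); (4,3); (3,3); (2,2)]);
  ((3,1),(2,3),[:: (3,1); (2,1); (1,1); (1,2); (1,3); (2,2); (3,2); (4,1); (4,2); (4,3); (3,3); (2,3)]);
  ((3,1),(3,2),[:: (3,1); (2,1); (1,1); (1,2); (1,3); (2,2); (2,3); (3,3); (4,3); (4,2); (4,1); (3,2)]);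
  ((3,1),(3,3),[:: (3,1); (2,1); (1,1); (1,2); (1,3); (2,2); (2,3); (3,2); (4,1); (4,2); (4,3); (3,3)]);
  ((3,2),(1,1),[:: (3,2); (2,1); (1,2); (1,3); (2,3); (3,3); (4,3); (4,2); (4,1); (3,1); (2,2); (1,1)]);
  ((3,2),(1,2),[:: (3,2); (2,1); (1,1); (2,2); (3,1); (4,1); (4,2); (4,3); (3,3); (2,3); (1,3); (1,2)]);
  ((3,2),(1,3),[:: (3,2); (2,1); (1,1); (1,2); (2,2); (3,1); (4,1); (4,2); (4,3); (3,3); (2,3); (1,3)]);
  ((3,2),(2,1),[:: (3,2); (2,2); (1,1); (1,2); (1,3); (2,3); (3,3); (4,3); (4,2); (4,1); (3,1); (2,1)]);
  ((3,2),(2,2),[:: (3,2); (2,1); (1,1); (1,2); (1,3); (2,3); (3,3); (4,3); (4,2); (4,1); (3,1); (2,2)]);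
  ((3,2),(2,3),[:: (3,2); (2,1); (1,1); (1,2); (1,3); (2,2); (3,1); (4,1); (4,2); (4,3); (3,3); (2,3)]);
  ((3,2),(3,1),[:: (3,2); (2,1); (1,1); (1,2); (1,3); (2,2); (2,3); (3,3); (4,3); (4,2); (4,1); (3,1)]);
  ((3,2),(3,3),[:: (3,2); (2,1); (1,1); (1,2); (1,3); (2,3); (2,2); (3,1); (4,1); (4,2); (4,3); (3,3)]);
  ((3,3),(1,1),[:: (3,3); (2,2); (1,2); (1,3); (2,3); (3,2); (4,3); (4,2); (4,1); (3,1); (2,1); (1,1)]);
  ((3,3),(1,2),[:: (3,3); (2,2); (1,1); (2,1); (3,1); (4,1); (4,2); (4,3); (3,2); (2,3); (1,3); (1,2)]);
  ((3,3),(1,3),[:: (3,3); (2,2); (1,1); (1,2); (2,1); (3,1); (4,1); (4,2); (4,3); (3,2); (2,3); (1,3)]);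
  ((3,3),(2,1),[:: (3,3); (2,2); (1,1); (1,2); (1,3); (2,3); (3,2); (4,3); (4,2); (4,1); (3,1); (2,1)]);
  ((3,3),(2,2),[:: (3,3); (2,3); (1,3); (1,2); (1,1); (2,1); (3,1); (4,1); (4,2); (4,3); (3,2); (2,2)]);
  ((3,3),(2,3),[:: (3,3); (2,2); (1,3); (1,2); (1,1); (2,1); (3,1); (4,1); (4,2); (4,3); (3,2); (2,3)]);
  ((3,3),(3,1),[:: (3,3); (2,2); (1,1); (2,1); (1,2); (1,3); (2,3); (3,2); (4,3); (4,2); (4,1); (3,1)]);
  ((3,3),(3,2),[:: (3,3); (2,2); (1,3); (2,3); (1,2); (1,1); (2,1); (3,1); (4,1); (4,2); (4,3); (3,2)])].

Lemma A3 : A 3.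
Proof. apply: (@A_of_base 3 tbl3). by vm_compute. Qed.

Lemma A4 : A 4.
Proof. apply: (@A_of_base 4 tbl4). by vm_compute. Qed.

Lemma zinv_catr n p q : zinv n q -> zinv n (p ++ q).
Proof.
rewrite /zinv => /orP [/andP [h1 h2]|/andP [h1 h2]]; apply/orP; [left|right];
  by rewrite !prs_catr.
Qed.

Lemma zinv_catl n p q : zinv n p -> zinv n (p ++ q).
Proof.
rewrite /zinv => /orP [/andP [h1 h2]|/andP [h1 h2]]; apply/orP; [left|right];
  by rewrite !prs_catl.
Qed.

Lemma col1b_catl p q : col1b p -> col1b (p ++ q).
Proof. move=> /hasP [uv h c]. apply/hasP; exists uv => //. exact: prs_catl. Qed.

Lemma col1b_catr p q : col1b q -> col1b (p ++ q).
Proof. move=> /hasP [uv h c]. apply/hasP; exists uv => //. exact: prs_catr. Qed.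

Lemma endsP p s t : ends p s t -> [/\ p != [::], head (0,0) p = s & last (0,0) p = t].
Proof. by case/and3P => a /eqP b /eqP c. Qed.

Lemma stepA k : A k.+3 -> A k.+4 -> A k.+4.+1.
Proof.
move=> IH3 IH4 [s1 s2] [t1 t2] hs ht ne /= h1 h2.
have ne' : (s1 != t1) || (s2 != t2) by move: ne; rewrite xpair_eqE negb_and.
rewrite /rect /= in hs ht.
case C1: ((s1 < k.+4) && (t1 < k.+4)).
  case: (IH4 (s1,s2) (t1,t2)) => //=; try (rewrite /rect /=; lia).
  move=> p [g e z c].
  case: (@right_ext k.+4 p (s1,s2) (t1,t2)) => // p' [g' e' z' c'].
  exists p'; split => //. apply/implyP => a; apply/implyP => b. apply: c'.
  by rewrite a b in c.
case C2: ((2 < s1) && (2 < t1)).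
  case: (IH4 (s1.-1,s2) (t1.-1,t2)) => //=; try (rewrite /rect /=; lia).
    rewrite xpair_eqE negb_and. lia.
  move=> p [g e z c].
  have c1 : col1b p.
    have a1 : 1 < s1.-1 by lia. have a2 : 1 < t1.-1 by lia.
    by move: c; rewrite a1 a2.
  case: (@left_ext k.+4 p (s1.-1,s2) (t1.-1,t2)) => // p' [g' e' z' c'].
  exists p'; split => //; last by rewrite c' !implybT.
  move: e'. rewrite /sh /=. have -> : 1 + s1.-1 = s1 by lia. by have -> : 1 + t1.-1 = t1 by lia.
have [[ls lt]|[lt ls]] : (s1 <= 2) /\ (3 < t1) \/ (t1 <= 2) /\ (3 < s1).
  move: C1 C2 => /negbT C1 /negbT C2. lia.
- case: (@pre_ok (s1,s2)); first by rewrite /rect /=; lia.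
  move=> pre [e [gp ep ap cp]].
  case: (IH3 (1,2) (t1 - 2,t2)) => //=; try (rewrite /rect /=; lia).
    rewrite xpair_eqE negb_and. lia.
  move=> p [g e' z _].
  have gq := good_sh 2 g. have eq := ends_sh 2 e'. have zq := zinv_sh 2 z.
  exists (pre ++ map (sh 2) p). split.
  + apply: (@good_eq (fun v => rect 1 2 v || rect 3 k.+4.+1 v)).
    * case: (endsP ep) => n1 _ l1. case: (endsP eq) => n2 hd2 _.
      apply: (good_cat gp gq) => //.
      -- move=> v; exact: rect_dis.
      -- by rewrite l1 hd2.
    * move=> v /=. by rewrite (@rect_split 1 2 k.+4.+1 v).
  + have E : sh 2 (t1 - 2, t2) = (t1, t2) by rewrite /sh /=; congr (_,_); lia.
    rewrite E in eq. exact: (ends_cat ep eq).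
  + exact: zinv_catr.
  + by rewrite col1b_catl // !implybT.
- case: (@post_ok (t1,t2)); first by rewrite /rect /=; lia.
  move=> post [e [gp ep ap cp]].
  case: (IH3 (s1 - 2,s2) (1,2)) => //=; try (rewrite /rect /=; lia).
    rewrite xpair_eqE negb_and. lia.
  move=> p [g e' z _].
  have gq := good_sh 2 g. have eq := ends_sh 2 e'. have zq := zinv_sh 2 z.
  exists (map (sh 2) p ++ post). split.
  + apply: (@good_eq (fun v => rect 3 k.+4.+1 v || rect 1 2 v)).
    * case: (endsP ep) => n1 hd1 _. case: (endsP eq) => n2 _ l2.
      apply: (good_cat gq gp) => //.
      -- move=> v h3 h4; exact: (rect_dis h4 h3).
      -- by rewrite l2 hd1.
    * move=> v /=. by rewrite orbC (@rect_split 1 2 k.+4.+1 v).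
  + have E : sh 2 (s1 - 2, s2) = (s1, s2) by rewrite /sh /=; congr (_,_); lia.
    rewrite E in eq. exact: (ends_cat eq ep).
  + exact: zinv_catl.
  + by rewrite col1b_catr // !implybT.
Qed.

Lemma A_all m : 3 <= m -> A m.
Proof.
have H : forall k, A k.+3 /\ A k.+4.
  elim => [|k [IH3 IH4]]; first by split; [exact: A3 | exact: A4].
  split => //. exact: stepA.
move=> hm. have -> : m = (m - 3).+3 by lia. by case: (H (m - 3)).
Qed.

Lemma edge_of p u v : ((u, v) \in prs p) || ((v, u) \in prs p) -> path_has_edge p u v.
Proof.
case/orP => h; case: (mem_prs h) => l [r ->]; exists (size l); rewrite size_cat /=.
all: split; first by rewrite !addnS !ltnS leq_addr.
all: rewrite !nth_cat ltnn subnn /= ltnNge leqnSn /= subSn // subnn /=.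
- by left.
- by right.
Qed.

Theorem lemma6 (m : nat) (s t : nat * nat) :
  3 <= m ->
  in_rect m 3 s -> in_rect m 3 t -> s <> t ->
  s \notin [:: (m, 1); (m, 2); (m, 3)] ->
  t \notin [:: (m, 1); (m, 2); (m, 3)] ->
  exists p : seq (nat * nat),
    ham_path (in_rect m 3) s t p /\
    path_has_edge p (m, 1) (m, 2) /\ path_has_edge p (m, 2) (m, 3).
Proof.
move=> hm hs ht ne hsn htn.
have h1 : s.1 < m.
  move: hs hsn; case: s {ne} => a b; rewrite /in_rect !inE !xpair_eqE /=. lia.
have h2 : t.1 < m.
  move: ht htn; case: t {ne} => a b; rewrite /in_rect !inE !xpair_eqE /=. lia.
have ne' : s != t by apply/eqP.
case: (A_all hm hs ht ne' h1 h2) => p [g e z _].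
exists p. split; last first.
  move: z; rewrite /zinv => /orP [/andP [z1 z2]|/andP [z1 z2]];
    by split; apply: edge_of; rewrite ?z1 ?z2 ?orbT.
case: g => u so c. case: (endsP e) => nn hd lt.
case: p nn hd lt u so c {z e} => [//|a q] _ /= -> lt u so c.
exists q; split => //; split => //.
- apply/allP => v vin; exact: (etrans (c v) vin).
- move=> v hv; rewrite -c; exact: hv.
Qed.
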